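(* If $(\mathcal{F},P)$ is a fan poset, then $P$ orients the 1-skeleton of the dual sphere $\Gamma$ of $\mathcal{F}$; that is, identifying each element of $P$ (a maximal cone of $\mathcal{F}$) with the corresponding vertex of $\Gamma$, the Hasse diagram of $P$ is isomorphic as a graph to the 1-skeleton of $\Gamma$.
   Context: A fan in $\mathbb{R}^d$ is a family of nonempty closed polyhedral cones closed under nonempty faces, any two meeting in a face of each; it is complete if its union is $\mathbb{R}^d$. A fan poset $(\mathcal{F},P)$ is a complete fan with a partial order $P$ on its maximal cones such that (a) for each interval $I$ of $P$ the union of cones in $I$ is a polyhedral cone, and (b) for each cone $C$ of $\mathcal{F}$ the set of maximal cones containing $C$ is an interval of $P$. The dual sphere $\Gamma$ of a complete fan $\mathcal{F}$ is the regular CW sphere whose face poset, with a maximum element adjoined, is dual to the face lattice of $\mathcal{F}$ (cones ordered by inclusion, with a top adjoined); its vertices correspond to maximal cones of $\mathcal{F}$ and its edges to $(d-1)$-dimensional cones of $\mathcal{F}$, an edge joining the two maximal cones containing that cone. *)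

(* Defs.v *)
From HB Require Import structures.
From mathcomp Require Import all_boot all_order all_algebra.
From mathcomp Require Import classical_sets cardinality reals.
Set Implicit Arguments. Unset Strict Implicit. Unset Printing Implicit Defensive.
Import Order.TTheory GRing.Theory Num.Theory.
Local Open Scope ring_scope.
Local Open Scope classical_set_scope.

Section FanDefs.
Variables (R : realType) (d : nat).
Local Notation V := 'rV[R]_d.

Definition dotv (a x : V) : R := (a *m x^T) 0 0.

Definition polyhedral_cone (C : set V) : Prop :=
  exists (n : nat) (A : 'M[R]_(n, d)),
    C = [set x | forall i : 'I_n, 0 <= dotv (row i A) x].

(* G is a (nonempty) face of the cone C: cut out by a supporting hyperplane
   through the origin (w = 0 gives C itself) *)
Definition face_of (G C : set V) : Prop :=
  exists w : V, (forall x, C x -> 0 <= dotv w x) /\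
                G = C `&` [set x | dotv w x = 0].

(* dimension of a cone = dimension of its linear span *)
Definition cone_dim (C : set V) (k : nat) : Prop :=
  (exists M : 'M[R]_(k, d), (forall i, C (row i M)) /\ \rank M = k) /\
  (forall (m : nat) (M : 'M[R]_(m, d)), (forall i, C (row i M)) -> (\rank M <= k)%N).

Definition fan (F : set (set V)) : Prop :=
  [/\ finite_set F,
      (forall C, F C -> polyhedral_cone C /\ C !=set0),
      (forall C G, F C -> face_of G C -> G !=set0 -> F G) &
      (forall C1 C2, F C1 -> F C2 -> face_of (C1 `&` C2) C1 /\ face_of (C1 `&` C2) C2)].

Definition complete_fan (F : set (set V)) : Prop :=
  fan F /\ \bigcup_(C in F) C = setT.

Definition maximal_cone (F : set (set V)) (C : set V) : Prop :=
  F C /\ forall C', F C' -> C `<=` C' -> C' = C.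

Definition porder_on (X : set (set V)) (P : set V -> set V -> Prop) : Prop :=
  [/\ (forall x, X x -> P x x),
      (forall x y, X x -> X y -> P x y -> P y x -> x = y) &
      (forall x y z, X x -> X y -> X z -> P x y -> P y z -> P x z)].

Definition interval (F : set (set V)) (P : set V -> set V -> Prop) (x y : set V)
  : set (set V) := [set z | maximal_cone F z /\ P x z /\ P z y].

Definition is_interval (F : set (set V)) (P : set V -> set V -> Prop)
  (S : set (set V)) : Prop :=
  exists x y, maximal_cone F x /\ maximal_cone F y /\ P x y /\ S = interval F P x y.

Definition fan_poset (F : set (set V)) (P : set V -> set V -> Prop) : Prop :=
  [/\ complete_fan F,
      porder_on (maximal_cone F) P,
      (forall x y, maximal_cone F x -> maximal_cone F y -> P x y ->
         polyhedral_cone (\bigcup_(z in interval F P x y) z)) &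
      (forall C, F C -> is_interval F P [set M | maximal_cone F M /\ C `<=` M])].

Definition covers (F : set (set V)) (P : set V -> set V -> Prop) (x y : set V) : Prop :=
  [/\ maximal_cone F x, maximal_cone F y, P x y, x <> y &
      forall z, maximal_cone F z -> P x z -> P z y -> z = x \/ z = y].

Definition hasse_edge (F : set (set V)) (P : set V -> set V -> Prop) (x y : set V) : Prop :=
  covers F P x y \/ covers F P y x.

(* edge of the 1-skeleton of the dual sphere: the two maximal cones are
   distinct and both contain a common (d-1)-dimensional cone of F *)
Definition dual_edge (F : set (set V)) (x y : set V) : Prop :=
  [/\ maximal_cone F x, maximal_cone F y, x <> y &
      exists E, [/\ F E, cone_dim E d.-1, E `<=` x & E `<=` y]].

End FanDefs.

(* Main.v *)
Require Import Defs.
From HB Require Import structures.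
From mathcomp Require Import all_boot all_order all_algebra.
From mathcomp Require Import classical_sets cardinality reals boolp.
From mathcomp Require Import ring lra zify.
Set Implicit Arguments. Unset Strict Implicit. Unset Printing Implicit Defensive.
Import Order.TTheory GRing.Theory Num.Theory.
Local Open Scope ring_scope.
Local Open Scope classical_set_scope.

Section Aux.
Variables (R : realType) (d : nat).
Local Notation V := 'rV[R]_d.
Local Notation dot := (@dotv R d).

Lemma dotvE (a x : V) : dot a x = \sum_k a 0 k * x 0 k.
Proof. by rewrite /dotv !mxE; apply: eq_bigr => k _; rewrite mxE. Qed.

Lemma dotvDr a x y : dot a (x + y) = dot a x + dot a y.
Proof. by rewrite !dotvE -big_split; apply: eq_bigr => k _; rewrite mxE mulrDr. Qed.
Lemma dotvDl a b x : dot (a + b) x = dot a x + dot b x.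
Proof. by rewrite !dotvE -big_split; apply: eq_bigr => k _; rewrite mxE mulrDl. Qed.
Lemma dotvZr a c x : dot a (c *: x) = c * dot a x.
Proof. by rewrite !dotvE mulr_sumr; apply: eq_bigr => k _; rewrite mxE mulrCA. Qed.
Lemma dotvZl a c x : dot (c *: a) x = c * dot a x.
Proof. by rewrite !dotvE mulr_sumr; apply: eq_bigr => k _; rewrite mxE mulrA. Qed.
Lemma dotvNr a x : dot a (- x) = - dot a x.
Proof. by rewrite -scaleN1r dotvZr mulN1r. Qed.
Lemma dotvBr a x y : dot a (x - y) = dot a x - dot a y.
Proof. by rewrite dotvDr dotvNr. Qed.
Lemma dotv0r a : dot a 0 = 0.
Proof. by rewrite -(scale0r (0 : V)) dotvZr mul0r. Qed.
Lemma dotv0l x : dot 0 x = 0.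
Proof. by rewrite -(scale0r (0 : V)) dotvZl mul0r. Qed.
Lemma dotvC a x : dot a x = dot x a.
Proof. by rewrite !dotvE; apply: eq_bigr => k _; rewrite mulrC. Qed.

Lemma dotv_gt0 a : a != 0 -> 0 < dot a a.
Proof.
move=> a0; rewrite lt0r; apply/andP; split; last first.
  by rewrite dotvE; apply: sumr_ge0 => k _; rewrite -expr2 sqr_ge0.
apply: contra a0; rewrite dotvE => /eqP/psumr_eq0P H.
apply/eqP/matrixP => i k; rewrite (ord1 i) mxE.
have /eqP : a 0 k * a 0 k = 0 by apply: H => // j _; rewrite -expr2 sqr_ge0.
by rewrite mulf_eq0 orbb => /eqP.
Qed.

Definition hpoly n (A : 'M[R]_(n, d)) : set V :=
  [set x | forall i : 'I_n, 0 <= dot (row i A) x].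

Lemma polyP (C : set V) : polyhedral_cone C -> exists n (A : 'M[R]_(n, d)), C = hpoly A.
Proof. by []. Qed.

Lemma poly0 (C : set V) : polyhedral_cone C -> C 0.
Proof. by case=> n [A ->] i; rewrite dotv0r. Qed.
Lemma polyD (C : set V) x y : polyhedral_cone C -> C x -> C y -> C (x + y).
Proof. by case=> n [A ->] Hx Hy i; rewrite dotvDr addr_ge0. Qed.
Lemma polyZ (C : set V) c x : polyhedral_cone C -> 0 <= c -> C x -> C (c *: x).
Proof. by case=> n [A ->] c0 Hx i; rewrite dotvZr mulr_ge0. Qed.

Lemma ev_list (T : eqType) (s : seq T) (Q : T -> R -> Prop) :
  (forall t, t \in s -> exists2 del, 0 < del & forall e, 0 < e -> e <= del -> Q t e) ->
  exists2 del, 0 < del & forall t, t \in s -> forall e, 0 < e -> e <= del -> Q t e.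
Proof.
elim: s => [|t s IH] H; first by exists 1.
have [d1 d10 H1] := H t (mem_head _ _).
have [d2 d20 H2] : exists2 del, 0 < del & forall t, t \in s -> forall e, 0 < e -> e <= del -> Q t e.
  by apply: IH => u us; apply: H; rewrite inE us orbT.
exists (Num.min d1 d2); first by rewrite lt_min d10 d20.
move=> u; rewrite inE => /orP[/eqP ->|us] e e0; rewrite le_min => /andP[e1 e2].
  exact: H1.
exact: H2.
Qed.

Lemma perturb n (A : 'M[R]_(n, d)) p v :
  (forall i, 0 < dot (row i A) p \/ (dot (row i A) p = 0 /\ 0 <= dot (row i A) v)) ->
  exists2 del, 0 < del & forall e, 0 < e -> e <= del -> hpoly A (p + e *: v).
Proof.
move=> H.
have Hi : forall i, i \in enum 'I_n -> exists2 del, 0 < del &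
   forall e, 0 < e -> e <= del -> 0 <= dot (row i A) (p + e *: v).
  move=> i _; case: (H i) => h.
  - exists (dot (row i A) p / (`|dot (row i A) v| + 1)).
      by rewrite divr_gt0 // ltr_pwDr // normr_ge0.
    move=> e e0 ed; rewrite dotvDr dotvZr.
    move: h ed; set a := dot (row i A) p; set b := dot (row i A) v => h ed.
    have hb : 0 < `|b| + 1 by rewrite ltr_pwDr // normr_ge0.
    have h2 : e * (`|b| + 1) <= a by rewrite -ler_pdivlMr.
    have h1 : - `|b| <= b by rewrite lerNnormlW.
    nra.
  - exists 1 => // e e0 _; rewrite dotvDr dotvZr; case: h => -> h; rewrite add0r mulr_ge0 //.
    exact: ltW.
have [del del0 Hd] := ev_list Hi.
exists del => // e e0 ed i; apply: Hd => //; by rewrite mem_enum.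
Qed.

Lemma hpoly_poly n (A : 'M[R]_(n, d)) : polyhedral_cone (hpoly A).
Proof. by exists n, A. Qed.

Definition RIprop n (A : 'M[R]_(n, d)) p :=
  forall i, 1 <= dot (row i A) p \/ (forall v, hpoly A v -> dot (row i A) v = 0).

Lemma RI n (A : 'M[R]_(n, d)) : exists2 p, hpoly A p & RIprop A p.
Proof.
suff H : forall s : seq 'I_n, exists2 p, hpoly A p & forall i, i \in s ->
   1 <= dot (row i A) p \/ (forall v, hpoly A v -> dot (row i A) v = 0).
  by have [p Hp Hs] := H (enum 'I_n); exists p => // i; apply: Hs; rewrite mem_enum.
elim=> [|i s [p' Hp' Hs]]; first by exists 0 => //; apply: poly0 (hpoly_poly A).
case: (pselect (exists2 v, hpoly A v & 0 < dot (row i A) v)) => [[v hv vpos]|nv].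
- exists (p' + (dot (row i A) v)^-1 *: v).
    by apply: polyD (hpoly_poly A) _ _ => //; apply: polyZ (hpoly_poly A) _ _ => //;
       rewrite invr_ge0 ltW.
  move=> j; rewrite inE => /orP[/eqP ->|js].
    left; rewrite dotvDr dotvZr mulVf ?gt_eqF // lerDr; exact: Hp'.
  case: (Hs j js) => [h|h]; [left|by right].
  apply: le_trans h _; rewrite dotvDr dotvZr lerDl mulr_ge0 // ?invr_ge0 ?ltW //.
- exists p' => // j; rewrite inE => /orP[/eqP ->|js]; last exact: Hs.
  right => v hv; apply/eqP; rewrite eq_le (hv i) andbT leNgt; apply/negP => h.
  by apply: nv; exists v.
Qed.

Lemma relint n (A : 'M[R]_(n, d)) p : hpoly A p -> RIprop A p ->
  forall w, (forall v, hpoly A v -> 0 <= dot w v) -> dot w p = 0 ->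
  forall v, hpoly A v -> dot w v = 0.
Proof.
move=> Hp HRI w wge wp v hv.
have [del del0 Hd] : exists2 del, 0 < del & forall e, 0 < e -> e <= del -> hpoly A (p + e *: - v).
  apply: perturb => i; case: (HRI i) => h; first by left; apply: lt_le_trans h.
  by right; rewrite dotvNr !h // oppr0.
have := wge _ (Hd del del0 (lexx _)); rewrite dotvDr dotvZr dotvNr wp add0r.
rewrite mulrN oppr_ge0 pmulr_rle0 // => h; apply/eqP; rewrite eq_le h wge //.
Qed.

Lemma interior n (A : 'M[R]_(n, d)) p : hpoly A p -> RIprop A p ->
  (forall i, (forall v, hpoly A v -> dot (row i A) v = 0) -> row i A = 0) ->
  forall v, exists2 del, 0 < del & hpoly A (p + del *: v).
Proof.
move=> Hp HRI H0 v.
have [del del0 Hd] : exists2 del, 0 < del & forall e, 0 < e -> e <= del -> hpoly A (p + e *: v).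
  apply: perturb => i; case: (HRI i) => h; first by left; apply: lt_le_trans h.
  by right; rewrite (H0 i h) !dotv0l; split.
by exists del => //; apply: Hd.
Qed.

Lemma EV (F : set (set V)) : complete_fan F -> forall p r : V,
  exists Q, [/\ F Q, Q p & exists2 e, 0 < e & Q (p + e *: r)].
Proof.
move=> [[Ffin Fpoly _ _] Fcov] p r.
have [s Fs] := (finite_seqP F).1 Ffin.
have Hi : forall Q, Q \in s -> exists2 del, 0 < del &
   forall e, 0 < e -> e <= del -> Q (p + e *: r) -> Q p.
  move=> Q Qs; have FQ : F Q by rewrite Fs. move: (Fpoly _ FQ) => [/polyP [n [A ->]] _].
  case: (pselect (hpoly A p)) => [hp|np]; first by exists 1.
  have [i hi] : exists i, dot (row i A) p < 0.
    apply: contra_notP np => H i; rewrite leNgt; apply/negP => h; apply: H; by exists i.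
  exists (- dot (row i A) p / (`|dot (row i A) r| + 1)).
    by rewrite divr_gt0 ?oppr_gt0 // ltr_pwDr // normr_ge0.
  move=> e e0 ed /(_ i); rewrite dotvDr dotvZr.
  move: hi ed; set a := dot (row i A) p; set b := dot (row i A) r => hi ed.
  have hb : 0 < `|b| + 1 by rewrite ltr_pwDr // normr_ge0.
  have h2 : e * (`|b| + 1) <= - a by rewrite -ler_pdivlMr.
  have h1 : b <= `|b| by rewrite ler_norm.
  move=> h; exfalso; clear -hi h2 h1 h e0 hb; nra.
have [del del0 Hd] := ev_list Hi.
have : (\bigcup_(C in F) C) (p + del *: r) by rewrite Fcov.
case=> Q FQ HQ; exists Q; split => //; last by exists del.
apply: (Hd Q) HQ => //; by move: FQ; rewrite Fs.
Qed.

Lemma FD (F : set (set V)) x : complete_fan F -> maximal_cone F x ->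
  forall r, (forall v, x v -> dot r v = 0) -> r = 0.
Proof.
move=> Fc [Fx xmax] r Hr.
have [[_ Fpoly _ Fint] _] := Fc.
have [/polyP [n [A xA]] _] := Fpoly _ Fx.
have [p Hp HRI] := RI A.
have [Q [FQ Qp [e e0 Qe]]] := EV Fc p r.
have [_ [w [wge Hw]]] := Fint _ _ FQ Fx.
have xp : x p by rewrite xA.
have wp : dot w p = 0.
  have : (x `&` [set v | dot w v = 0]) p by rewrite -Hw.
  by case.
have Hx : forall v, x v -> Q v.
  move=> v xv; have : (x `&` [set v | dot w v = 0]) v.
    split => //=; rewrite xA in xv; apply: (relint Hp HRI) => // u hu.
    by apply: wge; rewrite xA.
  by rewrite -Hw => -[].
have Qx : Q = x by apply: xmax.
rewrite Qx in Qe; have := Hr _ Qe; rewrite dotvDr dotvZr (Hr _ xp) add0r.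
move/eqP; rewrite mulf_eq0 gt_eqF //= => /eqP h.
apply/eqP; apply: contraT => rn; have := dotv_gt0 rn; by rewrite h ltxx.
Qed.

Lemma mul_tr_dot m (M : 'M[R]_(m, d)) (u : V) i : (u *m M^T) 0 i = dot u (row i M).
Proof. by rewrite dotvE !mxE; apply: eq_bigr => k _; rewrite !mxE. Qed.

Lemma orth_ker m (M : 'M[R]_(m, d)) (u : V) :
  (forall i, dot u (row i M) = 0) -> (u <= kermx M^T)%MS.
Proof. by move=> H; apply/sub_kermxP/matrixP => a i; rewrite (ord1 a) mul_tr_dot mxE H. Qed.

Lemma rank_ker_le m (M : 'M[R]_(m, d)) (u : V) : u != 0 ->
  (forall i, dot u (row i M) = 0) -> (\rank M <= d.-1)%N.
Proof.
move=> u0 H; have := mxrankS (orth_ker H).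
rewrite rank_rV u0 mxrank_ker mxrank_tr /=.
have := rank_leq_col M; lia.
Qed.

Lemma ker_line (K : 'M[R]_(d.-1, d)) (w u : V) : \rank K = d.-1 -> w != 0 ->
  (forall i, dot w (row i K) = 0) -> (forall i, dot u (row i K) = 0) ->
  exists c, u = c *: w.
Proof.
move=> rK w0 Hw Hu.
have d0 : (0 < d)%N.
  case: d K w u rK w0 Hw Hu => // K w u _ w0; by rewrite thinmx0 eqxx in w0.
have wk := orth_ker Hw; have uk := orth_ker Hu.
have := mxrank_leqif_sup wk; rewrite rank_rV w0 mxrank_ker mxrank_tr rK.
move=> [_ Heq].
have kw : (kermx K^T <= w)%MS by rewrite -Heq; apply/eqP; lia.
apply/sub_rVP; exact: submx_trans uk kw.
Qed.

Lemma cone_dim_of (E : set V) k :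
  (exists m (M : 'M[R]_(m, d)), (forall i, E (row i M)) /\ \rank M = k) ->
  (forall m (M : 'M[R]_(m, d)), (forall i, E (row i M)) -> (\rank M <= k)%N) ->
  cone_dim E k.
Proof.
move=> [m [M [HE <-]]] Hle; split => //.
exists (rowsub (maxrankfun M) M); split; first by move=> i; rewrite row_rowsub.
by rewrite (eq_maxrowsub M).
Qed.

Lemma SEG n1 (A : 'M[R]_(n1, d)) n2 (B : 'M[R]_(n2, d)) (p q : V) :
  hpoly A p -> hpoly B q ->
  (forall s, 0 <= s -> s <= 1 -> hpoly A (p + s *: (q - p)) \/ hpoly B (p + s *: (q - p))) ->
  exists s, [/\ 0 <= s, s <= 1, hpoly A (p + s *: (q - p)) & hpoly B (p + s *: (q - p))].
Proof.
move=> Ap Bq Hu.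
pose T := [set s : R | [/\ 0 <= s, s <= 1 & hpoly A (p + s *: (q - p))]].
have T0 : T 0 by split => //; rewrite scale0r addr0.
have Tne : T !=set0 by exists 0.
have Tub : ubound T 1 by move=> s [].
have hT : has_ubound T by exists 1.
set s0 := sup T.
have s0ge : 0 <= s0 by apply: ub_le_sup.
have s0le : s0 <= 1 by apply: ge_sup.
have As0 : hpoly A (p + s0 *: (q - p)).
  move=> i; rewrite dotvDr dotvZr dotvBr.
  have a0 := Ap i; set a := dot (row i A) p in a0 *.
  set b := dot (row i A) q - a.
  case: (leP 0 b) => hb; first by rewrite addr_ge0 // mulr_ge0.
  have key : forall s, (s <= - a / b) = (0 <= a + s * b).
    move=> s; rewrite -(ler_nM2r hb) divfK ?lt_eqF //.
    by rewrite -subr_ge0 opprK addrC.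
  rewrite -key; apply: ge_sup => // s [s0' s1 /(_ i)].
  by rewrite dotvDr dotvZr dotvBr -/a -/b key.
case: (eqVneq s0 1) => [s01|s01].
  exists 1; split => //; first by rewrite -s01.
  by rewrite scale1r addrC subrK.
have s0lt : s0 < 1 by rewrite lt_neqAle s01.
exists s0; split => //.
have Hy : forall t, s0 < t -> t <= 1 -> hpoly B (p + t *: (q - p)).
  move=> t st t1; have t0 : 0 <= t by apply: le_trans (ltW st).
  case: (Hu t t0 t1) => // h; exfalso.
  have : t <= s0 by apply: ub_le_sup => //.
  by rewrite leNgt st.
move=> j; rewrite dotvDr dotvZr dotvBr.
set c := dot (row j B) p; set e := dot (row j B) q - c.
have Hj : forall t, s0 < t -> t <= 1 -> 0 <= c + t * e.
  by move=> t st t1; have := Hy t st t1 j; rewrite dotvDr dotvZr dotvBr.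
case: (leP e 0) => he.
  have := Hj 1 s0lt (lexx _); nra.
rewrite leNgt; apply/negP => hneg.
set g := - (c + s0 * e).
have g0 : 0 < g by rewrite /g oppr_gt0.
set t := s0 + Num.min (1 - s0) (g / (2 * e)).
have m0 : 0 < Num.min (1 - s0) (g / (2 * e)).
  by rewrite lt_min subr_gt0 s0lt divr_gt0 // mulr_gt0.
have m1 : Num.min (1 - s0) (g / (2 * e)) <= 1 - s0 by rewrite ge_min lexx.
have m2 : Num.min (1 - s0) (g / (2 * e)) <= g / (2 * e) by rewrite ge_min lexx orbT.
have m3 : e * Num.min (1 - s0) (g / (2 * e)) <= g / 2.
  have eq : e * (g / (2 * e)) = g / 2.
    by field; rewrite gt_eqF.
  by rewrite -eq ler_pM2l.
have := Hj t; rewrite /t; move: m0 m1 m3; set m := Num.min _ _ => m0 m1 m3.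
move=> /(_ _ _); rewrite ltrDl m0 => /(_ isT).
have -> : (s0 + m <= 1) by lra.
move=> /(_ isT); rewrite /g in m3; lra.
Qed.

Lemma side nA (A : 'M[R]_(nA, d)) (E : set V) (K : 'M[R]_(d.-1, d)) (p w q : V) :
  \rank K = d.-1 -> (forall i, E (row i K)) -> E `<=` hpoly A -> E p ->
  (forall f, (forall v, E v -> 0 <= dot f v) -> dot f p = 0 -> forall v, E v -> dot f v = 0) ->
  w != 0 -> (forall v, E v -> dot w v = 0) -> hpoly A q -> 0 < dot w q ->
  exists2 del, 0 < del & forall e, 0 < e -> e <= del -> hpoly A (p + e *: w).
Proof.
move=> rK EK EA Ep Hrel w0 wE Aq wq.
apply: perturb => i.
have a0 : 0 <= dot (row i A) p by apply: (EA p Ep).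
case: (ltP 0 (dot (row i A) p)) => h; first by left.
have {}h : dot (row i A) p = 0 by apply/eqP; rewrite eq_le h a0.
right; split => //.
have Hf := Hrel (row i A) (fun v Ev => EA v Ev i) h.
have [c Hc] := @ker_line K w (row i A) rK w0 (fun k => wE _ (EK k)) (fun k => Hf _ (EK k)).
have := Aq i; rewrite Hc !dotvZl => hq.
have c0 : 0 <= c by rewrite -(pmulr_lge0 _ wq).
by rewrite mulr_ge0 // ltW // dotv_gt0.
Qed.

Lemma pos_witness (F : set (set V)) (M1 M2 E : set V) (w : V) :
  maximal_cone F M1 -> F M2 -> M1 <> M2 -> E `<=` M2 ->
  (forall v, M1 v -> 0 <= dot w v) -> E = M1 `&` [set v | dot w v = 0] ->
  exists2 q, M1 q & 0 < dot w q.
Proof.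
move=> [FM1 mx] FM2 neq EM2 wge HE.
apply: contra_notP neq => H; symmetry; apply: mx => // v M1v.
apply: EM2; rewrite HE; split => //=; apply/eqP; rewrite eq_le wge // andbT leNgt.
by apply/negP => h; apply: H; exists v.
Qed.

Lemma core1 (F : set (set V)) (M1 M2 E : set V) (K : 'M[R]_(d.-1, d)) (w : V) :
  fan F -> maximal_cone F M1 -> maximal_cone F M2 -> M1 <> M2 -> F E ->
  \rank K = d.-1 -> (forall i, E (row i K)) ->
  (forall v, M1 v -> 0 <= dot w v) -> E = M1 `&` [set v | dot w v = 0] ->
  (forall v, M2 v -> 0 <= dot w v) -> E = M2 `&` [set v | dot w v = 0] -> False.
Proof.
move=> Ff mM1 mM2 neq FE rK EK w1 E1 w2 E2.
have [_ Fpoly _ Fint] := Ff.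
have EM1 : E `<=` M1 by rewrite E1 => v [].
have EM2 : E `<=` M2 by rewrite E2 => v [].
have wE : forall v, E v -> dot w v = 0 by rewrite E1 => v [].
have [q1 M1q1 wq1] := pos_witness mM1 mM2.1 neq EM2 w1 E1.
have [q2 M2q2 wq2] := pos_witness mM2 mM1.1 (nesym neq) EM1 w2 E2.
have w0 : w != 0 by apply: contraTneq wq1 => ->; rewrite dotv0l ltxx.
have [[u [uge Hu]] _] := Fint _ _ mM1.1 mM2.1.
have [c Hc] : exists c, u = c *: w.
  apply: (ker_line rK w0 (fun k => wE _ (EK k))) => k.
  have : (M1 `&` M2) (row k K) by split; [apply: EM1 | apply: EM2].
  by rewrite Hu => -[].
have c0 : 0 < c.
  have := uge _ M1q1; rewrite Hc dotvZl pmulr_lge0 // le0r => /orP[/eqP c0|//].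
  exfalso; apply: neq; symmetry; apply: mM1.2 => [|v M1v]; first exact: mM2.1.
  have : (M1 `&` [set v | dot u v = 0]) v by split => //=; rewrite Hc c0 scale0r dotv0l.
  by rewrite -Hu => -[].
have H12 : forall v, M1 v -> M2 v -> dot w v = 0.
  move=> v M1v M2v; have : (M1 `&` M2) v by [].
  rewrite Hu => -[_ /=]; rewrite Hc dotvZl => /eqP; rewrite mulf_eq0 gt_eqF //= => /eqP.
  done.
have [/polyP [nE [AE EAE]] _] := Fpoly _ FE.
have [p Ep HRI] := RI AE.
have Hrel : forall f, (forall v, E v -> 0 <= dot f v) -> dot f p = 0 -> forall v, E v -> dot f v = 0.
  by move=> f; rewrite EAE => fge fp v Ev; apply: (relint Ep HRI).
have Ep' : E p by rewrite EAE.
have [/polyP [n1 [A1 M1A]] _] := Fpoly _ mM1.1.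
have [/polyP [n2 [A2 M2A]] _] := Fpoly _ mM2.1.
have [d1 d10 H1] : exists2 del, 0 < del & forall e, 0 < e -> e <= del -> hpoly A1 (p + e *: w).
  apply: (side rK EK _ Ep' Hrel w0 wE (q := q1)).
  - by rewrite -M1A.
  - by rewrite -M1A.
  - done.
have [d2 d20 H2] : exists2 del, 0 < del & forall e, 0 < e -> e <= del -> hpoly A2 (p + e *: w).
  apply: (side rK EK _ Ep' Hrel w0 wE (q := q2)).
  - by rewrite -M2A.
  - by rewrite -M2A.
  - done.
set e := Num.min d1 d2.
have e0 : 0 < e by rewrite lt_min d10 d20.
have el : e <= d1 by rewrite ge_min lexx.
have er : e <= d2 by rewrite ge_min lexx orbT.
have := H12 (p + e *: w); rewrite M1A M2A.
move=> /(_ (H1 _ e0 el) (H2 _ e0 er)).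
rewrite dotvDr dotvZr (wE _ Ep') add0r => /eqP; rewrite mulf_eq0 gt_eqF //=.
by rewrite gt_eqF // dotv_gt0.
Qed.

Lemma rescale (M E : set V) (w : V) c : 0 < c ->
  (forall v, M v -> 0 <= dot (c *: w) v) -> E = M `&` [set v | dot (c *: w) v = 0] ->
  (forall v, M v -> 0 <= dot w v) /\ E = M `&` [set v | dot w v = 0].
Proof.
move=> c0 H HE; split.
  by move=> v Mv; have := H v Mv; rewrite dotvZl pmulr_rge0.
rewrite HE; apply/seteqP; split => v [Mv /= h]; split => //=.
  by move: h; rewrite dotvZl => /eqP; rewrite mulf_eq0 gt_eqF //= => /eqP.
by rewrite dotvZl h mulr0.
Qed.

Lemma dual_hasse (F : set (set V)) P x y : fan_poset F P -> dual_edge F x y -> hasse_edge F P x y.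
Proof.
move=> [Fc [Prefl Panti Ptrans] Pa Pb] [mx my nxy [E [FE [[K [EK rK]] _] Ex Ey]]].
have Ff := Fc.1; have [Ffin Fpoly Fclosed Fint] := Ff.
have getw : forall M, F M -> E `<=` M -> exists w,
    (forall v, M v -> 0 <= dot w v) /\ E = M `&` [set v | dot w v = 0].
  move=> M FM EM; have [[w [wge Hw]] _] := Fint _ _ FE FM.
  have [w' [w'ge Hw']] := (Fint _ _ FE FM).2.
  exists w'; split => //; rewrite -Hw'; apply/seteqP; split => v; first by move=> Ev; split => //; apply: EM.
  by case.
have Z : forall z, maximal_cone F z -> E `<=` z -> z = x \/ z = y.
  move=> z mz Ez.
  have [wx [wxge Hx]] := getw x mx.1 Ex.
  have [wy [wyge Hy]] := getw y my.1 Ey.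
  have [wz [wzge Hz]] := getw z mz.1 Ez.
  have [q1 _ wq1] := pos_witness mx my.1 nxy Ey wxge Hx.
  have wx0 : wx != 0 by apply: contraTneq wq1 => ->; rewrite dotv0l ltxx.
  have wxE : forall k, dot wx (row k K) = 0.
    by move=> k; have : E (row k K) by []; rewrite Hx => -[].
  have orthE : forall w' M, E = M `&` [set v | dot w' v = 0] -> forall k, dot w' (row k K) = 0.
    by move=> w' M HM k; have : E (row k K) by []; rewrite HM => -[].
  have [cy Hcy] := ker_line rK wx0 wxE (orthE _ _ Hy).
  have [cz Hcz] := ker_line rK wx0 wxE (orthE _ _ Hz).
  have cyneg : cy < 0.
    case: (ltgtP cy 0) => // h.
    - exfalso; rewrite Hcy in wyge Hy; have [h1 h2] := rescale h wyge Hy.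
      exact: (core1 Ff mx my nxy FE rK EK wxge Hx h1 h2).
    - have [q2 _ wq2] := pos_witness my mx.1 (nesym nxy) Ex wyge Hy.
      by move: wq2; rewrite Hcy h scale0r dotv0l ltxx.
  case: (pselect (z = x \/ z = y)) => // /not_orP [nzx nzy]; exfalso.
  case: (ltgtP cz 0) => h.
  - have Hzy : wz = (cz / cy) *: wy by rewrite Hcz Hcy scalerA divfK ?lt_eqF.
    have hc : 0 < cz / cy by rewrite -mulrNN -invrN divr_gt0 // oppr_gt0.
    rewrite Hzy in wzge Hz; have [h1 h2] := rescale hc wzge Hz.
    exact: (core1 Ff my mz (nesym nzy) FE rK EK wyge Hy h1 h2).
  - rewrite Hcz in wzge Hz; have [h1 h2] := rescale h wzge Hz.
    exact: (core1 Ff mx mz (nesym nzx) FE rK EK wxge Hx h1 h2).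
  - have [q2 _ wq2] := pos_witness mz mx.1 nzx Ex wzge Hz.
    by move: wq2; rewrite Hcz h scale0r dotv0l ltxx.
have [a [b [ma [mb [Pab HS]]]]] := Pb E FE.
have Sx : Defs.interval F P a b x by rewrite -HS.
have Sy : Defs.interval F P a b y by rewrite -HS.
have Sa : [set M | maximal_cone F M /\ E `<=` M] a by rewrite HS; split => //; split => //; exact: Prefl.
have Sb : [set M | maximal_cone F M /\ E `<=` M] b by rewrite HS; split => //; split => //; exact: Prefl.
case: Sx => _ [Pax Pxb]; case: Sy => _ [Pay Pyb].
case: (Z a ma Sa.2) => ea; case: (Z b mb Sb.2) => eb; subst a b.
- by exfalso; apply: nxy; apply: Panti.
- left; split => // z mz Pxz Pzy; apply: (Z z mz).
  have : [set M | maximal_cone F M /\ E `<=` M] z by rewrite HS; split => //; split => //.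
  by case.
- right; split => //; first exact: nesym.
  move=> z mz Pxz Pzy; have : [set M | maximal_cone F M /\ E `<=` M] z by rewrite HS; split => //; split => //.
  by case=> _ /(Z z mz) [] ->; [right|left].
- by exfalso; apply: nxy; apply: Panti.
Qed.

Lemma seg_id (t b : V) s : t + s *: (b - t) = (1 - s) *: t + s *: b.
Proof. by rewrite scalerBr scalerBl scale1r addrCA addrC. Qed.

Lemma covers_dual (F : set (set V)) P x y : fan_poset F P -> covers F P x y -> dual_edge F x y.
Proof.
move=> [Fc [Prefl Panti Ptrans] Pa Pb] [mx my Pxy nxy btw].
have Ff := Fc.1; have [Ffin Fpoly Fclosed Fint] := Ff.
have [/polyP [n1 [A1 xA]] _] := Fpoly _ mx.1.
have [/polyP [n2 [A2 yA]] _] := Fpoly _ my.1.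
set G := x `&` y.
have [[u [uge Hu]] _] := Fint _ _ mx.1 my.1.
have FG : F G.
  apply: (Fclosed x G mx.1 (Fint _ _ mx.1 my.1).1).
  exists 0; split; [exact: poly0 (Fpoly _ mx.1).1 | exact: poly0 (Fpoly _ my.1).1].
have Gx : G `<=` x by move=> v [].
have Gy : G `<=` y by move=> v [].
have uG : forall v, G v -> dot u v = 0 by rewrite /G Hu => v [].
have u0 : u != 0.
  apply/negP => /eqP u0; apply: nxy; symmetry; apply: mx.2 => [|v xv]; first exact: my.1.
  have : (x `&` [set v | dot u v = 0]) v by split => //=; rewrite u0 dotv0l.
  by rewrite -Hu => -[].
have [b yb nxb] : exists2 b, y b & ~ x b.
  apply: contra_notP nxy => H; apply: my.2 => [|v yv]; first exact: mx.1.
  by apply: contra_notP H => nxv; exists v.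
have /polyP [nU [AU UA]] : polyhedral_cone (x `|` y).
  have -> : x `|` y = \bigcup_(z in Defs.interval F P x y) z.
    apply/seteqP; split => v.
    - case=> h; [exists x => //; split => //; split => //; exact: Prefl|].
      by exists y => //; split => //; split => //; exact: Prefl.
    - case=> z [mz [Pxz Pzy]] zv; by case: (btw z mz Pxz Pzy) => <-; [left|right].
  exact: Pa.
have segG : forall t, x t -> exists g, G g /\ (t <= g + b)%MS.
  move=> t xt.
  have [|||s [s0 s1 hA hB]] := @SEG _ A1 _ A2 t b.
  - by rewrite -xA.
  - by rewrite -yA.
  - move=> s s0 s1.
    have : (x `|` y) (t + s *: (b - t)).
      rewrite seg_id UA; apply: polyD (hpoly_poly AU) _ _.
      + by apply: polyZ (hpoly_poly AU) _ _; [rewrite subr_ge0|rewrite -UA; left].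
      + by apply: polyZ (hpoly_poly AU) _ _ => //; rewrite -UA; right.
    by case=> h; [left; rewrite -xA | right; rewrite -yA].
  set g := t + s *: (b - t) in hA hB *.
  have Gg : G g by split; [rewrite xA | rewrite yA].
  exists g; split => //.
  have s1' : 1 - s != 0.
    rewrite subr_eq0; apply/negP => /eqP s1e; apply: nxb.
    by move: hA; rewrite /g -s1e scale1r addrC subrK xA.
  have -> : t = (1 - s)^-1 *: g + (- ((1 - s)^-1 * s)) *: b.
    by rewrite /g seg_id scalerDr !scalerA mulVf // scale1r scaleNr addrK.
  by apply: addmx_sub; apply: scalemx_sub; [exact: addsmxSl | exact: addsmxSr].
have [p xp HRI] := RI A1.
have Hint : forall v, exists2 del, 0 < del & hpoly A1 (p + del *: v).
  apply: (interior xp HRI) => i Hi; apply: (FD Fc mx) => v xv; apply: Hi.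
  by rewrite -xA.
have [g0 [Gg0 pg0]] : exists g, G g /\ (p <= g + b)%MS by apply: segG; rewrite xA.
have Hj : forall j : 'I_d, exists g1, G g1 /\ ((delta_mx 0 j : 'rV[R]_d) <= (g1 + b) + (g0 + b))%MS.
  move=> k; have [del del0 hd] := Hint (delta_mx 0 k).
  have xt : x (p + del *: delta_mx 0 k) by rewrite xA.
  have [g1 [Gg1 tg1]] := segG _ xt.
  exists g1; split => //.
  have -> : delta_mx 0 k = del^-1 *: (p + del *: delta_mx 0 k) + (- del^-1) *: p.
    by rewrite scalerDr scalerA mulVf ?gt_eqF // scale1r scaleNr addrAC subrr add0r.
  apply: addmx_sub; apply: scalemx_sub.
  - exact: submx_trans tg1 (addsmxSl _ _).
  - exact: submx_trans pg0 (addsmxSr _ _).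
have [g1 Hg1] := fin_all_exists Hj.
set M := col_mx (\matrix_j g1 j) g0.
have rowsG : forall k, G (row k M).
  move=> k; case: (splitP k) => k' hk.
  - have -> : k = lshift 1 k' by apply/val_inj.
    by rewrite rowKu rowK; exact: (Hg1 k').1.
  - have -> : k = rshift d k' by apply/val_inj.
    by rewrite rowKd row_id.
have sub1 : (1%:M <= M + b)%MS.
  apply/row_subP => j; rewrite row1; apply: submx_trans (Hg1 j).2 _.
  have gM : (g1 j <= M)%MS by have := row_sub (lshift 1 j) M; rewrite rowKu rowK.
  have g0M : (g0 <= M)%MS by have := row_sub (rshift d (0 : 'I_1)) M; rewrite rowKd row_id.
  by rewrite addsmx_sub; apply/andP; split; apply: addsmxS.
have r1 := mxrankS sub1; rewrite mxrank1 in r1.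
have r2 := (mxrank_adds_leqif M b).1.
have r3 := rank_leq_row b.
have r4 := rank_ker_le u0 (fun i => uG _ (rowsG i)).
split => //; exists G; split => //.
apply: cone_dim_of.
  by exists (d + 1)%N, M; split => //; lia.
by move=> m M' HM'; apply: (rank_ker_le u0) => i; apply: uG.
Qed.

End Aux.

Unset Implicit Arguments.

Theorem proposition3p3 (R : realType) (d : nat)
  (F : set (set 'rV[R]_d)) (P : set 'rV[R]_d -> set 'rV[R]_d -> Prop) :
  fan_poset F P ->
  forall x y : set 'rV[R]_d, hasse_edge F P x y <-> dual_edge F x y.
Proof.
move=> FP x y; split.
- case=> h; first exact: covers_dual h.
  have [my mx nyx [E [FE dE Ey Ex]]] := covers_dual FP h.
  split => //; first exact: nesym.
  by exists E; split.
- exact: dual_hasse.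
Qed.
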